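(* Let $G=(V,E)$ be a connected graph on $n$ vertices with $\delta(G)\geq 3$ and vertex connectivity $\kappa(G)=1$ (that is, $G$ has a cut vertex). Then $F(G)\geq \lfloor (n+1)/2\rfloor$.
   Context: All graphs are finite and simple. A vertex cut of a connected graph is a set of vertices whose removal leaves a disconnected or trivial graph; $\kappa(G)$ is the minimum size of a vertex cut. Given a graph $G=(V,E)$ and a set $S\subseteq V$ of filled vertices, the color change rule is: if a filled vertex $v$ has exactly one unfilled neighbor $w$, then $w$ becomes filled. The derived set of $S$ is the set of filled vertices obtained after applying the rule until no further application is possible. $S$ is a zero forcing set if its derived set is $V$; otherwise $S$ is a failed zero forcing set. The failed zero forcing number $F(G)$ is the maximum size of a failed zero forcing set of $G$. *)

(* Defs.v *)
(* Simple graphs as symmetric irreflexive relations on a finType. *)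
From mathcomp Require Import all_boot.
Set Implicit Arguments. Unset Strict Implicit. Unset Printing Implicit Defensive.

Section Graphs.
Variables (T : finType) (e : rel T).

Definition nbhd (v : T) : {set T} := [set u | e v u].

Definition connected_on (A : {set T}) : bool :=
  [forall x in A, forall y in A,
     connect [rel u w | [&& e u w, u \in A & w \in A]] x y].

Definition connected_graph : bool := connected_on [set: T].

Definition vertex_cut (S : {set T}) : bool :=
  ~~ connected_on (~: S) || (#|~: S| <= 1).

(* vertex connectivity: minimum size of a vertex cut (setT is always one) *)
Definition kappa : nat :=
  \big[minn/#|T|]_(S : {set T} | vertex_cut S) #|S|.

Definition force_step (S : {set T}) : {set T} :=
  S :|: [set w | [exists v in S,
     (w \notin S) && (nbhd v :\: S == [set w])]].

(* derived set: iterate the rule until it stabilises (#|T| rounds suffice,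
   as each non-stable round fills at least one new vertex) *)
Definition derived (S : {set T}) : {set T} := iter #|T| force_step S.

Definition zero_forcing (S : {set T}) : bool := derived S == [set: T].

Definition failed_zero_forcing (S : {set T}) : bool := ~~ zero_forcing S.

Definition F_number : nat :=
  \max_(S : {set T} | failed_zero_forcing S) #|S|.

End Graphs.

(* Main.v *)
Require Import Defs.
From mathcomp Require Import all_boot.
From mathcomp Require Import zify.
Set Implicit Arguments. Unset Strict Implicit. Unset Printing Implicit Defensive.
Section Aux.
Variables (T : finType) (e : rel T).
Lemma stall_derived (S : {set T}) :
  (forall s w, s \in S -> nbhd e s :\: S != [set w]) -> derived e S = S.
Proof.
move=> Hst.
have fs : force_step e S = S.
  rewrite /force_step; apply/setUidPl; apply/subsetP => w.
  rewrite inE => /existsP [s /andP [sS /andP [wS /eqP H]]].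
  by have := Hst s w sS; rewrite H eqxx.
rewrite /derived; elim: #|T| => //= k ->; exact: fs.
Qed.
Lemma failed_ge (S : {set T}) :
  (forall s w, s \in S -> nbhd e s :\: S != [set w]) -> S != setT ->
  #|S| <= F_number e.
Proof.
move=> Hst HT; apply: (@leq_bigmax_cond _ (fun S => failed_zero_forcing e S)).
by rewrite /failed_zero_forcing /zero_forcing (stall_derived Hst).
Qed.
Lemma card_ne1 (X : {set T}) w : #|X| != 1 -> X != [set w].
Proof. by apply: contra => /eqP ->; rewrite cards1. Qed.

Definition eA (A : {set T}) := [rel u w | [&& e u w, u \in A & w \in A]].

Lemma key (v x : T) : symmetric e -> irreflexive e ->
  (forall v : T, 3 <= #|nbhd e v|) -> x != v ->
  2 * #|[set z | connect (eA (~: [set v])) x z]| <= #|T| - 1 ->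
  (#|T| + 1) %/ 2 <= F_number e.
Proof.
move=> sym irr deg xv.
set A := ~: [set v].
set C := [set z | connect (eA A) x z] => HC.
have xA : x \in A by rewrite !inE.
have CA : forall z, z \in C -> z != v.
  move=> z; rewrite inE => /connectP [p pth ->].
  suff : last x p \in A by rewrite !inE.
  elim: p x xA pth {xv HC C} => [|a p IH] u uA //= /andP [/and3P [_ _ aA] pth].
  exact: IH.
have Ccl : forall z u, z \in C -> e z u -> u != v -> u \in C.
  move=> z u zC ezu uv; move: (zC); rewrite !inE => cz.
  apply: (connect_trans cz); apply: connect1; rewrite /= ezu !inE uv.
  by rewrite (CA _ zC).
have out0 : forall s, s \notin C -> s != v -> #|nbhd e s :&: C| = 0.
  move=> s sC sv; apply/eqP; rewrite cards_eq0; apply/eqP/setP => u.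
  rewrite inE [u \in set0]inE [u \in nbhd e s]inE; apply/negbTE; apply/andP => [[esu uC]].
  by move: sC; rewrite (Ccl u s uC _ sv) // sym.
have xC : x \in C by rewrite inE connect0.
have cardC : forall X : {set T}, #|~: X| = #|T| - #|X|.
  by move=> X; rewrite -(cardsC X); lia.
case: (eqVneq #|nbhd e v :&: C| 1) => [/eqP/cards1P [w Hw] | Hn1].
- have wvC : w \in nbhd e v :&: C by rewrite Hw inE.
  have wC : w \in C by move: wvC; rewrite inE => /andP[].
  set U := C :\ w.
  have big2 : 2 <= #|nbhd e w :&: U|.
    have := deg w; rewrite (cardsD1 v) => h.
    apply: leq_trans (_ : #|nbhd e w :\ v| <= _).
      by move: h; case: (v \in nbhd e w) => /=; lia.
    apply: subset_leq_card; apply/subsetP => u; rewrite in_setD1 [u \in nbhd e w]inE => /andP [uv ewu].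
    rewrite in_setI in_setD1 [u \in nbhd e w]inE ewu (Ccl w u wC ewu uv) andbT /=.
    by apply/eqP => uw; move: ewu; rewrite uw irr.
  have cU : #|U| = #|C| - 1 by rewrite /U (cardsD1 w C) wC /=; lia.
  have : #|~: U| <= F_number e.
    apply: failed_ge.
    + move=> s w' sS; apply: card_ne1; rewrite setDE setCK.
      case: (eqVneq s v) => [-> | sv].
      * apply/eqP => h; have : #|nbhd e v :&: U| = 0.
          apply/eqP; rewrite cards_eq0; apply/eqP/setP => u.
          rewrite !inE; apply/negbTE; apply/andP => [[evu /andP [uw uC]]].
          have : u \in nbhd e v :&: C by rewrite !inE evu uC.
          by rewrite Hw inE (negbTE uw).
        by rewrite h.
      case: (eqVneq s w) => [-> | sw]; first by move: big2; lia.
      have sC : s \notin C by move: sS; rewrite !inE sw.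
      apply/eqP => h; have : #|nbhd e s :&: U| <= #|nbhd e s :&: C|.
        by apply: subset_leq_card; apply: setIS; apply: subsetDl.
      by rewrite h out0.
    + apply/eqP => h; have : 0 < #|nbhd e w :&: U| by lia.
      case/card_gt0P => u; rewrite in_setI => /andP [_ uU].
      have : u \in ~: U by rewrite h inE.
      by rewrite inE uU.
  rewrite cardC cU; lia.
- have : #|~: C| <= F_number e.
    apply: failed_ge.
    + move=> s w' sS; apply: card_ne1; rewrite setDE setCK.
      case: (eqVneq s v) => [-> // | sv].
      have sC : s \notin C by move: sS; rewrite inE.
      by rewrite out0.
    + apply/eqP => h; have : x \in ~: C by rewrite h inE.
      by rewrite inE xC.
  rewrite cardC; lia.
Qed.
End Aux.
Theorem lemma4 (T : finType) (e : rel T) :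
  symmetric e -> irreflexive e ->
  connected_graph e ->
  (forall v : T, 3 <= #|nbhd e v|) ->
  kappa e = 1 ->
  (#|T| + 1) %/ 2 <= F_number e.
Proof.
move=> sym irr conn deg kap.
have kT : kappa e <= #|T|.
  rewrite /kappa; apply: (big_ind (fun m => m <= #|T|)) => //.
  - by move=> a b ha hb; rewrite geq_min ha.
  - by move=> S' _; apply: max_card.
have n3 : 3 <= #|T|.
  have : 0 < #|T| by move: kT; rewrite kap.
  case/card_gt0P => x0 _; apply: leq_trans (deg x0) _; exact: max_card.
have : [exists S : {set T}, vertex_cut e S && (#|S| <= 1)].
  case: (boolP [exists S : {set T}, vertex_cut e S && (#|S| <= 1)]) => // /existsPn H.
  have : 2 <= kappa e.
    rewrite /kappa; apply: (big_ind (fun m => 2 <= m)).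
    - lia.
    - by move=> a b ha hb; rewrite leq_min ha.
    - by move=> S' cS'; move: (H S'); rewrite cS' /=; lia.
  by rewrite kap.
case/existsP => S /andP [cutS S1].
have S0 : S != set0.
  apply/eqP => S0; move: cutS; rewrite S0 /vertex_cut setC0.
  by move: conn; rewrite /connected_graph => -> /=; rewrite cardsT; lia.
have [v Sv] : exists v, S = [set v].
  apply/cards1P; move: S0; rewrite -card_gt0; lia.
move: cutS; rewrite Sv /vertex_cut cardsC1.
have -> : (#|T|.-1 <= 1) = false by lia.
rewrite orbF.
set A := ~: [set v].
move=> /forall_inPn [x xA /forall_inPn [y yA nxy]].
have nxy' : ~~ connect (eA e A) x y by [].
have syA : symmetric (eA e A).
  by move=> a b; rewrite /= sym; case: (a \in A); case: (b \in A); rewrite ?andbT ?andbF.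
have xv : x != v by move: xA; rewrite !inE.
have yv : y != v by move: yA; rewrite !inE.
set C := [set z | connect (eA e A) x z].
set D := [set z | connect (eA e A) y z].
have CA : C \subset A.
  apply/subsetP => z; rewrite inE => /connectP [p pth ->].
  elim: p x xA {nxy nxy' xv C D} pth => [|a p IH] u uA //= /andP [/and3P [_ _ aA] pth].
  exact: IH.
have DA : D \subset A.
  apply/subsetP => z; rewrite inE => /connectP [p pth ->].
  elim: p y yA {nxy nxy' yv C D CA} pth => [|a p IH] u uA //= /andP [/and3P [_ _ aA] pth].
  exact: IH.
have CD : C :&: D = set0.
  apply/setP => z; rewrite !inE; apply/negbTE/negP => /andP [cz dz].
  move/negP: nxy'; apply; apply: (connect_trans cz).
  by rewrite (sym_connect_sym syA).
have sum : #|C| + #|D| <= #|T| - 1.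
  have := cardsU C D; rewrite CD cards0 subn0 => <-.
  have sU : C :|: D \subset A by rewrite subUset CA DA.
  have := subset_leq_card sU; rewrite /A cardsC1; lia.
case: (leqP #|C| #|D|) => h.
- apply: (key sym irr deg xv); rewrite -/A -/C; lia.
- apply: (key sym irr deg yv); rewrite -/A -/D; lia.
Qed.
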